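(* Let $K$ be the maximum number of constructors of any datatype and $D$ the maximum number of datatypes in any slice. Then the number of distinct atomic constraints whose refinement variables are among a given set of $v$ refinement variables is $\mathcal{O}(K v^2 D \cdot 2^{vKD+K})$.
   Context: There is a finite set of datatype identifiers. Each datatype $d$ has a finite set $\mathrm{Con}(d)$ of constructors, and each constructor has a list of argument types that may mention other datatypes. The slice of $d$ is the least set of datatypes containing $d$ and closed under ''occurs in an argument type of a constructor of''. Each refinement variable $X$ is associated with a single slice, and the pairs $X(d)$ are formed only with $d$ in that slice. A constructor set expression over $d$ is either a finite set $\{k_1,\dots,k_m\} \subseteq \mathrm{Con}(d)$ or a pair $X(d)$. A constraint $\phi \mathbin{?} S_1 \subseteq S_2$ consists of a finite guard $\phi$ of membership facts $k \in X(d)$ and a body inclusion $S_1 \subseteq S_2$ between expressions over the same datatype. It is atomic if its body has one of the forms $X(d) \subseteq Y(d)$, $X(d) \subseteq \{k_1,\dots,k_m\}$, $k \in X(d)$, or $k \in \emptyset$. *)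

(* Defs.v *)
From mathcomp Require Import all_boot.
Set Implicit Arguments. Unset Strict Implicit. Unset Printing Implicit Defensive.

Section Constraints.
(* dt  : the finite set of datatype identifiers
   con : all constructors (of all datatypes); [owner k] is the datatype
         whose constructor k is, so Con(d) = [set k | owner k == d]
   args k : the list of argument types of constructor k, each argument type
         being represented by the list of datatypes occurring in it
   V   : the given finite set of refinement variables; [root X] is the
         datatype whose slice X is associated with. *)
Variables (dt con V : finType) (owner : con -> dt) (args : con -> seq (seq dt))
          (root : V -> dt).

Definition Con (d : dt) : {set con} := [set k | owner k == d].

Definition slice_closed (S : {set dt}) : bool :=
  [forall d1 in S, forall k : con,
     (owner k == d1) ==> all (fun a => all (fun d2 => d2 \in S) a) (args k)].

Definition slice (d : dt) : {set dt} :=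
  \bigcap_(S : {set dt} | (d \in S) && slice_closed S) S.

Definition maxK : nat := \max_(d : dt) #|Con d|.
Definition maxD : nat := \max_(d : dt) #|slice d|.

(* membership fact  k \in X(d)  *)
Definition fact := (con * V * dt)%type.
(* constructor set expression: a finite constructor set, or a pair X(d) *)
Definition sexpr := ({set con} + (V * dt))%type.
(* constraint  phi ? S1 <= S2 , both expressions being over datatype d *)
Definition constraint := ({set fact} * sexpr * sexpr * dt)%type.

Definition wf_fact (f : fact) : bool :=
  let: (k, X, d) := f in (d \in slice (root X)) && (owner k == d).

Definition wf_sexpr (d : dt) (e : sexpr) : bool :=
  match e with
  | inl A => A \subset Con d
  | inr (X, d') => (d' == d) && (d \in slice (root X))
  end.

Definition wf_constraint (c : constraint) : bool :=
  let: (phi, S1, S2, d) := c in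
  [forall f in phi, wf_fact f] && wf_sexpr d S1 && wf_sexpr d S2
  (* the datatype of the body lies in the slice of one of the variables
     (automatic unless the body is  k \in emptyset) *)
  && [exists X : V, d \in slice (root X)].

(* atomic bodies: X(d) <= Y(d), X(d) <= {k1..km}, k \in X(d) (i.e. {k} <= X(d)),
   k \in emptyset (i.e. {k} <= emptyset) *)
Definition atomic (c : constraint) : bool :=
  let: (_, S1, S2, _) := c in
  match S1, S2 with
  | inr _, inr _ => true
  | inr _, inl _ => true
  | inl A, inr _ => #|A| == 1
  | inl A, inl B => (#|A| == 1) && (B == set0)
  end.

Definition atomic_constraints : {set constraint} :=
  [set c | wf_constraint c && atomic c].

End Constraints.

(* Main.v *)
Require Import Defs.
From mathcomp Require Import all_boot zify.

Lemma card_bigcup_le (I T : finType) (A : {set I}) (F : I -> {set T}) :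
  #|\bigcup_(i in A) F i| <= \sum_(i in A) #|F i|.
Proof.
apply: (big_ind2 (fun (S : {set T}) n => #|S| <= n)) => //.
- by rewrite cards0.
- move=> x1 x2 y1 y2 h1 h2; rewrite cardsU.
  exact: leq_trans (leq_subr _ _) (leq_add h1 h2).
Qed.

Lemma cardsU_le (T : finType) (A B : {set T}) : #|A :|: B| <= #|A| + #|B|.
Proof. by rewrite cardsU leq_subr. Qed.

Arguments card_bigcup_le {I T} A F.

Lemma sum_le_const (I : finType) (A : {set I}) (F : I -> nat) c :
  (forall i, i \in A -> F i <= c) -> \sum_(i in A) F i <= #|A| * c.
Proof.
move=> h; rewrite -sum1_card big_distrl /=.
by apply: leq_sum => i /h; rewrite mul1n.
Qed.

Arguments sum_le_const {I} A F c.

Section S.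
Variables (dt con V : finType) (owner : con -> dt) (args : con -> seq (seq dt))
          (root : V -> dt).

Let K := maxK owner.
Let D := maxD owner args.

Definition XD : {set V * dt} := [set p | p.2 \in slice owner args (root p.1)].

Lemma conK d : #|Con owner d| <= K.
Proof. rewrite /K /maxK; exact: leq_bigmax. Qed.

Lemma sliceD d : #|slice owner args d| <= D.
Proof. rewrite /D /maxD; exact: leq_bigmax. Qed.

Lemma card_XD : #|XD| <= #|V| * D.
Proof.
have sub : XD \subset \bigcup_(X in [set: V]) [set (X, d) | d in slice owner args (root X)].
  apply/subsetP => -[X d]; rewrite inE /= => hd.
  by apply/bigcupP; exists X; rewrite ?inE //; apply/imsetP; exists d.
apply: leq_trans (subset_leq_card sub) _.
apply: leq_trans (card_bigcup_le _ _) _.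
rewrite -(cardsT V); apply: sum_le_const => X _.
exact: leq_trans (leq_imset_card _ _) (sliceD _).
Qed.

Definition W : {set con * V * dt} := [set f | wf_fact owner args root f].

Lemma card_W : #|W| <= #|V| * K * D.
Proof.
have sub : W \subset \bigcup_(p in XD) [set (k, p.1, p.2) | k in Con owner p.2].
  apply/subsetP => -[[k X] d]; rewrite inE /= => /andP[hd hk].
  apply/bigcupP; exists (X, d); first by rewrite inE.
  by apply/imsetP; exists k; rewrite ?inE.
apply: leq_trans (subset_leq_card sub) _.
apply: leq_trans (card_bigcup_le _ _) _.
rewrite mulnAC; apply: leq_trans (sum_le_const _ _ K _) _.
  by move=> p _; apply: leq_trans (leq_imset_card _ _) (conK _).
by rewrite leq_mul2r card_XD orbT.
Qed.

Local Notation body := (({set con} + (V * dt)) * ({set con} + (V * dt)) * dt)%type.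

Definition G (p : V * dt) : {set body} :=
  [set (inr p, inr (Y, p.2), p.2) | Y in [set: V]] :|:
  [set (inr p, inl B, p.2) | B in powerset (Con owner p.2)] :|:
  [set (inl [set k], inr p, p.2) | k in Con owner p.2] :|:
  [set (inl [set k], inl set0, p.2) | k in Con owner p.2].

Definition Bodies : {set body} := \bigcup_(p in XD) G p.

Lemma card_G p : #|G p| <= #|V| + 2 ^ K + K + K.
Proof.
rewrite /G; apply: leq_trans (cardsU_le _ _ _) _.
apply: leq_add; last exact: leq_trans (leq_imset_card _ _) (conK _).
apply: leq_trans (cardsU_le _ _ _) _.
apply: leq_add; last exact: leq_trans (leq_imset_card _ _) (conK _).
apply: leq_trans (cardsU_le _ _ _) _.
apply: leq_add.
  by apply: leq_trans (leq_imset_card _ _) _; rewrite cardsT.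
apply: leq_trans (leq_imset_card _ _) _.
by rewrite card_powerset leq_pexp2l ?conK.
Qed.

Definition mk (t : {set con * V * dt} * body) :=
  (t.1, t.2.1.1, t.2.1.2, t.2.2).

Lemma AC_sub : atomic_constraints owner args root \subset mk @: setX (powerset W) Bodies.
Proof.
apply/subsetP => -[[[phi S1] S2] d]; rewrite inE /= => /andP[/andP[/andP[/andP[hphi h1] h2] hex] hat].
apply/imsetP; exists (phi, (S1, S2, d)) => //.
rewrite inE /=; apply/andP; split.
  rewrite powersetE; apply/subsetP => f hf; rewrite inE.
  exact: (forall_inP hphi).
apply/bigcupP.
case: S1 h1 hat => [A|[X d']] /= h1 hat.
- case: S2 h2 hat => [B|[Y d'']] /= h2 hat.
  + case/andP: hat => /cards1P[k eA] /eqP eB; subst A B.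
    have hk : k \in Con owner d by move/subsetP: h1; apply; rewrite inE.
    case/existsP: hex => X hX.
    by exists (X, d); [rewrite inE | rewrite /G; apply/setUP; right; apply/imsetP; exists k].
  + case/cards1P: hat => k eA; subst A.
    have hk : k \in Con owner d by move/subsetP: h1; apply; rewrite inE.
    case/andP: h2 => /eqP -> hY; exists (Y, d); first by rewrite inE.
    by rewrite /G; apply/setUP; left; apply/setUP; right; apply/imsetP; exists k.
- case/andP: h1 => /eqP -> hX; exists (X, d); first by rewrite inE.
  case: S2 h2 hat => [B|[Y d'']] /= h2 hat.
  + rewrite /G; apply/setUP; left; apply/setUP; left; apply/setUP; right; apply/imsetP.
    by exists B; rewrite // powersetE.
  + case/andP: h2 => /eqP -> _.
    rewrite /G; apply/setUP; left; apply/setUP; left; apply/setUP; left; apply/imsetP.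
    by exists Y; rewrite ?inE.
Qed.

Lemma main_bound : #|atomic_constraints owner args root| <=
   2 ^ (#|V| * K * D) * (#|V| * D * (#|V| + 2 ^ K + K + K)).
Proof.
apply: leq_trans (subset_leq_card AC_sub) _.
apply: leq_trans (leq_imset_card _ _) _.
rewrite cardsX card_powerset; apply: leq_mul.
  by rewrite leq_pexp2l // card_W.
apply: leq_trans (card_bigcup_le _ _) _.
apply: leq_trans (sum_le_const _ _ (#|V| + 2 ^ K + K + K) _) _.
  by move=> p _; apply: card_G.
by rewrite leq_mul2r card_XD orbT.
Qed.

End S.

Theorem lemma9p4 :
  exists C : nat,
    forall (dt con V : finType) (owner : con -> dt) (args : con -> seq (seq dt))
           (root : V -> dt),
      0 < maxK owner ->
      #|atomic_constraints owner args root| <=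
        C * maxK owner * #|V| ^ 2 * maxD owner args
          * 2 ^ (#|V| * maxK owner * maxD owner args + maxK owner).
Proof.
exists 4 => dt con V owner args root hK.
apply: leq_trans (main_bound _ _ _ owner args root) _.
rewrite expnD.
move: hK.
generalize (maxK owner) (maxD owner args) #|V| => K D v hK.
case: v => [|v]; first by rewrite !mul0n muln0.
have hQ : 0 < 2 ^ K by rewrite expn_gt0.
move: (2 ^ (v.+1 * K * D)) => P.
move: (2 ^ K) hQ => Q hQ.
have e : v.+1 + Q + K + K <= 4 * K * v.+1 * Q by nia.
apply: leq_trans (leq_mul (leqnn P) (leq_mul (leqnn (v.+1 * D)) e)) _.
rewrite expnS expn1.
lia.
Qed.
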